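(* Let $\lambda$ be an irreducible representation of $S_n$ with $d_\lambda > e^{-\sqrt{n}\log n}\sqrt{n!}$. Then the width and the height of the Young diagram of $\lambda$ are both less than $4\sqrt{n}\log n$.
   Context: Irreps of $S_n$ are indexed by Young diagrams (partitions $\lambda_1\ge\lambda_2\ge\cdots$ of $n$); the width is the length of the first row $\lambda_1$ and the height is the number of rows. $d_\lambda$ is the dimension of the irrep; $\log$ is the natural logarithm. *)

(* Defs.v *)
From HB Require Import structures.
From mathcomp Require Import all_boot all_order all_algebra.
From mathcomp Require Import all_classical all_reals all_analysis.
Set Implicit Arguments. Unset Strict Implicit. Unset Printing Implicit Defensive.

Definition is_partition (n : nat) (la : seq nat) : bool :=
  [&& sorted geq la, all (fun r => 0 < r) la & sumn la == n].

Definition yd_width (la : seq nat) : nat := head 0 la.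
Definition yd_height (la : seq nat) : nat := size la.

Definition in_diagram (la : seq nat) (c : nat * nat) : bool :=
  (c.1 < size la) && (c.2 < nth 0 la c.1).

(* A standard Young tableau of shape la with entries 0..n-1, encoded by the
   position t k of entry k: t is injective, lands in the diagram, and entries
   increase along rows and down columns (k placed weakly north-west of l
   forces k <= l). Since #cells = n, t is then a bijection onto the cells. *)
Definition is_syt (n : nat) (la : seq nat) (t : {ffun 'I_n -> 'I_n * 'I_n}) : bool :=
  [&& injectiveb t,
      [forall k, in_diagram la ((t k).1 : nat, (t k).2 : nat)] &
      [forall k, forall l,
         (((t k).1 <= (t l).1) && ((t k).2 <= (t l).2))%N ==> (k <= l)%N]].

(* d_lambda = dimension of the irrep of S_n indexed by la
   = number of standard Young tableaux of shape la. *)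
Definition dim_irrep (n : nat) (la : seq nat) : nat :=
  #|[set t : {ffun 'I_n -> 'I_n * 'I_n} | is_syt la t]|.

(* Main.v *)
Require Import Defs.
From HB Require Import structures.
From mathcomp Require Import all_boot all_order all_algebra.
From mathcomp Require Import all_classical all_reals all_analysis.
Import Order.TTheory GRing.Theory Num.Theory.
From mathcomp Require Import zify ring lra.
Set Implicit Arguments. Unset Strict Implicit. Unset Printing Implicit Defensive.

Section Young.
Variable N : nat.

Definition part (s : seq nat) := (size s == N) && all (fun i => nth 0 s i.+1 <= nth 0 s i) (iota 0 N).
Definition incr (s : seq nat) i := set_nth 0 s i (nth 0 s i).+1.
Definition decr (s : seq nat) j := set_nth 0 s j (nth 0 s j).-1.
Definition addb (s : seq nat) i := (i == 0) || (nth 0 s i < nth 0 s i.-1).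
Definition remb (s : seq nat) j := nth 0 s j.+1 < nth 0 s j.
Definition zero := nseq N 0.

Lemma partP s : part s -> size s = N /\ forall i, nth 0 s i.+1 <= nth 0 s i.
Proof.
case/andP => /eqP sz /allP h; split => // i.
case: (ltnP i N) => hi; first by apply: h; rewrite mem_iota.
by have -> : nth 0 s i.+1 = 0 by apply: nth_default; rewrite sz; lia.
Qed.

Lemma partI s : size s = N -> (forall i, nth 0 s i.+1 <= nth 0 s i) -> part s.
Proof. by move=> sz h; rewrite /part sz eqxx /=; apply/allP => i _ /=; exact: h. Qed.

Lemma part_mono s i j : part s -> i <= j -> nth 0 s j <= nth 0 s i.
Proof.
move=> /partP [_ h] /subnK <-; elim: (j - i) => [|k IH] //=.
by rewrite addSn; apply: leq_trans (h _) IH.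
Qed.

Lemma nth_incr s i j : nth 0 (incr s i) j = (i == j) + nth 0 s j.
Proof. by rewrite /incr nth_set_nth /=; case: eqP => [->|]; rewrite ?eqxx //; case: eqP => // ->. Qed.

Lemma nth_decr s i j : nth 0 (decr s i) j = if j == i then (nth 0 s i).-1 else nth 0 s j.
Proof. by rewrite /decr nth_set_nth. Qed.

Lemma size_incr s i : i < size s -> size (incr s i) = size s.
Proof. by move=> h; rewrite /incr size_set_nth; lia. Qed.

Lemma size_decr s i : i < size s -> size (decr s i) = size s.
Proof. by move=> h; rewrite /decr size_set_nth; lia. Qed.

Lemma sumn_incr s i : i < size s -> sumn (incr s i) = (sumn s).+1.
Proof.
move=> h; rewrite /incr sumn_set_nth0.
have : nth 0 s i <= sumn s.
  elim: s i h => [|x s IH] [|i] //= h; first by lia.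
  by have := IH i h; lia.
lia.
Qed.

Lemma sumn_decr s i : i < size s -> 0 < nth 0 s i -> sumn (decr s i) = (sumn s).-1.
Proof.
move=> h h0; rewrite /decr sumn_set_nth0.
have : nth 0 s i <= sumn s.
  elim: s i h {h0} => [|x s IH] [|i] //= h; first by lia.
  by have := IH i h; lia.
lia.
Qed.

Lemma eq_seqN s t : size s = N -> size t = N -> (forall i, nth 0 s i = nth 0 t i) -> s = t.
Proof. by move=> hs ht h; apply: (eq_from_nth (x0 := 0)); rewrite ?hs ?ht // => i _; apply h. Qed.

Lemma part_incr s i : part s -> i < N -> addb s i -> part (incr s i).
Proof.
move=> ps iN; have [sz h] := partP ps; rewrite /addb => ha.
apply: partI; first by rewrite size_incr // sz.
move=> j; rewrite !nth_incr; have := h j.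
case: (eqVneq i j.+1) => [e|ne].
  by move: ha; rewrite e /= (gtn_eqF (ltnSn j)); lia.
by case: (i == j) => /=; lia.
Qed.

Lemma part_decr s j : part s -> j < N -> remb s j -> part (decr s j).
Proof.
move=> ps jN; have [sz h] := partP ps; rewrite /remb => hr.
apply: partI; first by rewrite size_decr // sz.
move=> i; rewrite !nth_decr; have := h i.
case: (eqVneq i.+1 j) => [e|ne]; case: (eqVneq i j) => [e1|ne1] //=; try (subst; lia).
all: by move=> *; subst; lia.
Qed.


Fixpoint WS (k : nat) (G : seq nat -> nat) (s : seq nat) : nat :=
  if k is k'.+1 then \sum_(0 <= i < N | addb s i) WS k' G (incr s i) else G s.

Definition f n lam := WS n (fun s => (s == lam) : nat) zero.

Lemma part_zero : part zero.
Proof. by apply: partI; rewrite ?size_nseq // => i; rewrite !nth_nseq; case: ifP; case: ifP. Qed.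

Lemma WS_le k G G' s : (forall t, part t -> G t <= G' t) -> part s -> WS k G s <= WS k G' s.
Proof.
move=> h; elim: k s => [|k IH] s ps /=; first exact: h.
rewrite big_nat_cond [X in _ <= X]big_nat_cond; apply: leq_sum => i /andP [/andP [_ iN] ha].
by apply: IH; apply: part_incr.
Qed.

Lemma WS_ext k G G' s : (forall t, part t -> G t = G' t) -> part s -> WS k G s = WS k G' s.
Proof.
move=> h ps; apply/eqP; rewrite eqn_leq; apply/andP; split; apply: WS_le => // t pt; by rewrite h.
Qed.

Lemma WS_scale k c G s : WS k (fun t => c * G t) s = c * WS k G s.
Proof.
elim: k s => [|k IH] s //=; rewrite big_distrr /=; apply: eq_bigr => i _; exact: IH.
Qed.

Lemma WS_sum k (P : pred nat) (F : nat -> seq nat -> nat) s :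
  WS k (fun t => \sum_(0 <= j < N | P j) F j t) s = \sum_(0 <= j < N | P j) WS k (F j) s.
Proof.
elim: k s => [|k IH] s //=.
rewrite (eq_bigr (fun i => \sum_(0 <= j < N | P j) WS k (F j) (incr s i))); last by move=> i _; exact: IH.
by rewrite exchange_big_nat.
Qed.

Lemma WS_last k G s :
  WS k.+1 G s = WS k (fun t => \sum_(0 <= i < N | addb t i) G (incr t i)) s.
Proof.
elim: k s => [|k IH] s //=; apply: eq_bigr => i _; exact: IH.
Qed.

Lemma idx_eq t lam i : part t -> part lam -> i < N ->
  (addb t i && (incr t i == lam)) = (remb lam i && (t == decr lam i)).
Proof.
move=> pt pl iN; have [st ht] := partP pt; have [sl hl] := partP pl.
apply/andP/andP => [[a /eqP <-] | [r /eqP ->]]; split.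
- by rewrite /remb !nth_incr eqxx (ltn_eqF (ltnSn i)) /=; have := ht i; lia.
- apply/eqP; apply: eq_seqN => //; first by rewrite size_decr ?size_incr ?st.
  by move=> j; rewrite nth_decr !nth_incr eqxx; case: eqP => [->|ne] //=; rewrite eq_sym; case: eqP.
- rewrite /addb; case: eqP => //= ne; rewrite !nth_decr eqxx.
  have -> : (i.-1 == i) = false by apply/eqP; lia.
  by move: r; rewrite /remb; have := hl i.-1; rewrite prednK; lia.
- apply/eqP; apply: eq_seqN => //; first by rewrite size_incr ?size_decr ?sl.
  move=> j; rewrite nth_incr nth_decr eq_sym; case: eqP => [->|] //=.
  by move: r; rewrite /remb; lia.
Qed.

Lemma branch m lam : part lam ->
  f m.+1 lam = \sum_(0 <= j < N | remb lam j) f m (decr lam j).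
Proof.
move=> pl; rewrite /f WS_last -WS_sum; apply: WS_ext; last exact: part_zero.
move=> t pt; rewrite big_mkcond [RHS]big_mkcond /=.
rewrite big_nat_cond [RHS]big_nat_cond; apply: eq_bigr => i /andP [/andP [_ iN] _].
have := idx_eq pt pl iN; move=> e; case: (addb t i) (remb lam i) e => [] [] /= e; by rewrite ?e // -?e.
Qed.


Lemma nth_le_sumn s i : nth 0 s i <= sumn s.
Proof. elim: s i => [|x s IH] [|i] //=; [lia | have := IH i; lia]. Qed.

Lemma sumn_nth s : sumn s = \sum_(0 <= i < size s) nth 0 s i.
Proof. by rewrite sumnE (big_nth 0). Qed.

Lemma part_sum0 s : part s -> sumn s = 0 -> s = zero.
Proof.
move=> ps s0; have [sz _] := partP ps; apply: eq_seqN => //; first by rewrite size_nseq.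
by move=> i; rewrite nth_nseq; have := nth_le_sumn s i; rewrite s0; case: ifP; lia.
Qed.

Lemma last_zero s : part s -> sumn s < N -> nth 0 s N.-1 = 0.
Proof.
move=> ps; have [sz _] := partP ps; rewrite sumn_nth sz => h.
have : \sum_(0 <= i < N) nth 0 s N.-1 <= \sum_(0 <= i < N) nth 0 s i.
  rewrite big_nat_cond [X in _ <= X]big_nat_cond; apply: leq_sum => i /andP [/andP [_ iN] _].
  by apply: part_mono; lia.
rewrite sum_nat_const_nat; nia.
Qed.

Lemma sum_split_at (P : pred nat) (F : nat -> nat) j : j < N ->
  \sum_(0 <= i < N | P i) F i = (if P j then F j else 0) + \sum_(0 <= i < N | P i && (i != j)) F i.
Proof.
move=> jN; rewrite big_mkcond (bigD1_seq j) ?mem_iota ?iota_uniq //=; last by lia.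
congr (_ + _); rewrite [RHS]big_mkcond [LHS]big_mkcond; apply: eq_bigr => i _.
by case: (P i); case: (i != j).
Qed.

Lemma count_add s : part s -> sumn s < N ->
  \sum_(0 <= i < N | addb s i) 1 = (\sum_(0 <= j < N | remb s j) 1).+1.
Proof.
move=> ps h; have N0 : 0 < N by lia.
have l0 := last_zero ps h.
rewrite big_mkcond big_ltn //= big_add1 /=.
rewrite [in RHS]big_mkcond (_ : N = N.-1.+1); last by lia.
rewrite big_nat_recr //= /remb /=.
have -> : nth 0 s N.-1.+1 < nth 0 s N.-1 = false by rewrite l0.
by rewrite addn0 add1n.
Qed.

Lemma diamond nu (i j : nat) : part nu -> i != j ->
  (addb nu i && remb (incr nu i) j) = (remb nu j && addb (decr nu j) i).
Proof.
move=> pn ne; have [sz h] := partP pn.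
rewrite /addb /remb !nth_incr !nth_decr (negbTE ne).
case: i ne => [|i] ne /=; first by rewrite andbT.
case: (eqVneq i j) => [e|ne2].
  subst; rewrite eqxx /=; apply/idP/idP => /andP [? ?]; apply/andP; split; lia.
rewrite eqSS (negbTE ne2) /= add0n; by rewrite andbC.
Qed.

Lemma comm_id nu i j : size nu = N -> i < N -> j < N -> i != j ->
  decr (incr nu i) j = incr (decr nu j) i.
Proof.
move=> sz iN jN ne; apply: eq_seqN.
- by rewrite size_decr ?size_incr ?sz // size_incr sz.
- by rewrite size_incr ?size_decr ?sz // size_decr sz.
move=> k; rewrite nth_decr !nth_incr nth_decr.
case: (eqVneq k j) => [->|nk]; first by rewrite (negbTE ne).
done.
Qed.

Lemma diag1 nu i : part nu -> i < N -> remb (incr nu i) i /\ decr (incr nu i) i = nu.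
Proof.
move=> pn iN; have [sz h] := partP pn; split.
  by rewrite /remb !nth_incr eqxx (ltn_eqF (ltnSn i)) /=; have := h i; lia.
apply: eq_seqN => //; first by rewrite size_decr ?size_incr ?sz // size_incr sz.
by move=> j; rewrite nth_decr !nth_incr eqxx; case: eqP => [->|ne] //=; rewrite eq_sym; case: eqP.
Qed.

Lemma diag2 nu j : part nu -> j < N -> remb nu j -> addb (decr nu j) j /\ incr (decr nu j) j = nu.
Proof.
move=> pn jN r; have [sz h] := partP pn; split.
- rewrite /addb; case: eqP => //= ne; rewrite !nth_decr eqxx.
  have -> : (j.-1 == j) = false by apply/eqP; lia.
  by move: r; rewrite /remb; have := h j.-1; rewrite prednK; lia.
- apply: eq_seqN => //; first by rewrite size_incr ?size_decr ?sz // size_decr sz.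
  move=> k; rewrite nth_incr nth_decr eq_sym; case: eqP => [->|] //=.
  by move: r; rewrite /remb; lia.
Qed.


Lemma decomp m mu : part mu ->
  \sum_(0 <= i < N | addb mu i) f m.+1 (incr mu i) =
  (\sum_(0 <= i < N | addb mu i) 1) * f m mu +
  \sum_(0 <= j < N | remb mu j) \sum_(0 <= i < N | addb (decr mu j) i && (i != j))
       f m (incr (decr mu j) i).
Proof.
move=> pm; have [sz h] := partP pm.
rewrite big_distrl /=.
have -> : \sum_(0 <= i < N | addb mu i) f m.+1 (incr mu i) =
  \sum_(0 <= i < N | addb mu i) (1 * f m mu +
     \sum_(0 <= j < N | remb (incr mu i) j && (j != i)) f m (decr (incr mu i) j)).
  rewrite big_nat_cond [RHS]big_nat_cond; apply: eq_bigr => i /andP [/andP [_ iN] ha].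
  rewrite branch; last exact: part_incr.
  have [r e] := diag1 pm iN.
  by rewrite (sum_split_at _ _ iN) r e mul1n.
rewrite big_split /=; congr (_ + _).
rewrite big_mkcond [RHS]big_mkcond /=.
rewrite (eq_bigr (fun i => \sum_(0 <= j < N)
   (if addb mu i && (remb (incr mu i) j && (j != i)) then f m (decr (incr mu i) j) else 0))); last first.
  move=> i _; case: (addb mu i); last by rewrite big1.
  by rewrite big_mkcond.
rewrite [RHS](eq_bigr (fun j => \sum_(0 <= i < N)
   (if remb mu j && (addb (decr mu j) i && (i != j)) then f m (incr (decr mu j) i) else 0))); last first.
  move=> j _; case: (remb mu j); last by rewrite big1.
  by rewrite big_mkcond.
rewrite exchange_big_nat big_nat_cond [RHS]big_nat_cond; apply: eq_bigr => j /andP [/andP [_ jN] _].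
rewrite big_nat_cond [RHS]big_nat_cond; apply: eq_bigr => i /andP [/andP [_ iN] _].
case: (eqVneq i j) => [->|ne]; first by rewrite !andbF.
by rewrite !andbT (diamond pm ne) comm_id.
Qed.

Lemma key m mu : part mu -> sumn mu = m -> m < N ->
  \sum_(0 <= i < N | addb mu i) f m.+1 (incr mu i) = m.+1 * f m mu.
Proof.
elim: m mu => [|m IH] mu pm sm mN.
  have z := part_sum0 pm sm.
  rewrite decomp // (count_add pm); last by rewrite sm.
  rewrite (@big_pred0 _ _ _ _ _ (fun j => remb mu j)); last by move=> j; rewrite z /remb !nth_nseq; case: ifP; case: ifP.
  rewrite (@big_pred0 _ _ _ _ _ (fun j => remb mu j)); last by move=> j; rewrite z /remb !nth_nseq; case: ifP; case: ifP.
  by rewrite addn0.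
have [sz h] := partP pm.
rewrite decomp // (count_add pm); last by rewrite sm.
have E : \sum_(0 <= j < N | remb mu j) (f m.+1 mu + \sum_(0 <= i < N | addb (decr mu j) i && (i != j))
       f m.+1 (incr (decr mu j) i)) = m.+1 * f m.+1 mu.
  rewrite [in RHS](branch m pm) big_distrr /= big_nat_cond [RHS]big_nat_cond.
  apply: eq_bigr => j /andP [/andP [_ jN] r].
  have [a e] := diag2 pm jN r.
  have pd := part_decr pm jN r.
  have j0 : 0 < nth 0 mu j by move: r; rewrite /remb; lia.
  rewrite -(IH _ pd); last by lia.
    by rewrite [in RHS](sum_split_at _ _ jN) a e.
  by rewrite sumn_decr ?sz // sm.
have E2 : \sum_(0 <= j < N | remb mu j) f m.+1 mu = (\sum_(0 <= j < N | remb mu j) 1) * f m.+1 mu.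
  by rewrite big_distrl; apply: eq_bigr => * /=; lia.
move: E; rewrite big_split /= E2.
set A := \sum_(_ <= _ < _ | _) 1; set B := \sum_(_ <= _ < _ | _) _.
move=> E; rewrite (mulSn A) (mulSn m.+1); lia.
Qed.

Lemma planch k m mu : part mu -> sumn mu = m -> m + k <= N ->
  m`! * WS k (f (m + k)) mu = (m + k)`! * f m mu.
Proof.
elim: k m mu => [|k IH] m mu pm sm mk; first by rewrite !addn0.
have [sz _] := partP pm.
have IH' : forall i, i < N -> addb mu i ->
    m.+1`! * WS k (f (m + k.+1)) (incr mu i) = (m + k.+1)`! * f m.+1 (incr mu i).
  move=> i iN a; rewrite -addSnnS; apply: IH; first exact: part_incr.
    by rewrite sumn_incr ?sz // sm.
  by lia.
apply/eqP; rewrite -(eqn_pmul2l (ltn0Sn m)); apply/eqP.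
rewrite mulnA -factS /= big_distrr /=.
rewrite big_nat_cond (eq_bigr (fun i => (m + k.+1)`! * f m.+1 (incr mu i))); last first.
  by move=> i /andP [/andP [_ iN] a]; exact: IH'.
rewrite -big_distrr -big_nat_cond /= key //; last by lia.
by rewrite mulnCA.
Qed.

Lemma f_sq_le n lam : n <= N -> f n lam * f n lam <= n`!.
Proof.
move=> nN.
have s0 : sumn zero = 0 by rewrite sumn_nseq.
have P := @planch n 0 zero part_zero s0 nN.
rewrite fact0 mul1n add0n in P.
have f0 : f 0 zero = 1 by rewrite /f /= eqxx.
rewrite f0 muln1 in P; rewrite -P.
rewrite /f -WS_scale; apply: WS_le; last exact: part_zero.
by move=> t _; case: eqP => [->|] /=; rewrite ?muln1 ?muln0.
Qed.


Definition shift (s : seq nat) := rcons (behead s) 0.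

Lemma size_shift s : size s = N -> 0 < N -> size (shift s) = N.
Proof. by move=> sz N0; rewrite /shift size_rcons size_behead sz; lia. Qed.

Lemma nth_shift s i : size s = N -> 0 < N -> nth 0 (shift s) i = nth 0 s i.+1.
Proof.
move=> sz N0; rewrite /shift nth_rcons size_behead nth_behead sz.
case: ltnP => h //; case: eqP => e; rewrite nth_default // sz; lia.
Qed.

Lemma part_shift s : part s -> 0 < N -> part (shift s).
Proof.
move=> ps N0; have [sz h] := partP ps; apply: partI; first exact: size_shift.
by move=> i; rewrite !nth_shift.
Qed.

Lemma sum_ltN (P : pred nat) F : \sum_(0 <= j < N.-1 | P j) F j <= \sum_(0 <= j < N | P j) F j.
Proof. by rewrite [X in _ <= X](@big_cat_nat _ _ _ N.-1) //=; [apply: leq_addr | lia]. Qed.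

Lemma first_pos s n : part s -> sumn s = n.+1 -> 0 < nth 0 s 0.
Proof.
move=> ps sm; have [sz h] := partP ps.
have : sumn s <= \sum_(0 <= i < N) nth 0 s 0.
  rewrite sumn_nth sz big_nat_cond [X in _ <= X]big_nat_cond; apply: leq_sum => i _.
  by apply: part_mono.
rewrite sum_nat_const_nat sm; nia.
Qed.

Lemma row_bound n lam : 0 < N -> part lam -> sumn lam = n ->
  f n lam <= 'C(n, nth 0 lam 0) * f (n - nth 0 lam 0) (shift lam).
Proof.
elim: n lam => [|n IH] lam N0 pl sl.
  have z := part_sum0 pl sl.
  have sz : shift lam = zero.
    apply: eq_seqN; [by rewrite size_shift // z size_nseq | by rewrite size_nseq | move=> i].
    by rewrite z nth_shift ?size_nseq // !nth_nseq; case: ifP; case: ifP.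
  by rewrite sz z nth_nseq N0 bin0 mul1n.
have [szl hl] := partP pl.
set k := nth 0 lam 0.
have k1 : 0 < k := first_pos pl sl.
have kn : k <= n.+1 by rewrite -sl; apply: nth_le_sumn.
rewrite branch // (sum_split_at _ _ N0).
have T0 : (if remb lam 0 then f n (decr lam 0) else 0) <= 'C(n, k.-1) * f (n.+1 - k) (shift lam).
  case r: (remb lam 0) => //.
  have pd := part_decr pl N0 r.
  have := IH _ N0 pd; rewrite sumn_decr ?szl // sl => /(_ erefl).
  have -> : nth 0 (decr lam 0) 0 = k.-1 by rewrite nth_decr.
  have -> : shift (decr lam 0) = shift lam.
    apply: eq_seqN; [by rewrite size_shift // size_decr szl | exact: size_shift | move=> i].
    by rewrite !nth_shift ?size_decr ?szl // nth_decr.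
  by have -> : n - k.-1 = n.+1 - k by lia.
have T1 : \sum_(0 <= i < N | remb lam i && (i != 0)) f n (decr lam i) <=
          'C(n, k) * f (n.+1 - k) (shift lam).
  have ps := part_shift pl N0.
  have [szs hs] := partP ps.
  apply: (@leq_trans (\sum_(0 <= i < N | remb lam i && (i != 0)) 'C(n, k) * f (n - k) (decr (shift lam) i.-1))).
    rewrite big_nat_cond [X in _ <= X]big_nat_cond; apply: leq_sum => i /andP [/andP [_ iN] /andP [r i0]].
    have pd := part_decr pl iN r.
    have := IH _ N0 pd; rewrite sumn_decr ?szl // ?sl => [/(_ erefl)|]; last by move: r; rewrite /remb; lia.
    have -> : nth 0 (decr lam i) 0 = k by rewrite nth_decr eq_sym (negbTE i0).
    have -> // : shift (decr lam i) = decr (shift lam) i.-1.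
    apply: eq_seqN; [by rewrite size_shift // size_decr szl | by rewrite size_decr szs; lia | move=> j].
    rewrite !nth_shift ?size_decr ?szl // !nth_decr nth_shift //.
    rewrite nth_shift //; case: i i0 {r pd iN} => // i _ /=; by case: eqP => [->|].
  rewrite big_ltn_cond // /= big_add1 /=.
  rewrite (eq_bigl (fun j => remb (shift lam) j)); last by move=> j; rewrite andbT /remb !nth_shift.
  rewrite -big_distrr /=.
  rewrite andbF; case: (leqP k n) => kn'; last by rewrite bin_small // mul0n.
  rewrite leq_mul2l; apply/orP; right.
  rewrite (subSn kn') (branch _ ps); exact: sum_ltN.
have := leq_add T0 T1.
rewrite -mulnDl; case: k k1 {kn T0 T1} => // k' _ /=.
by rewrite binS [_ + 'C(n, k')]addnC.
Qed.


Definition hh (s : seq nat) := index 0 s.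

Lemma pos_hh s i : part s -> (0 < nth 0 s i) = (i < hh s).
Proof.
move=> ps; rewrite /hh; case: (ltnP i (index 0 s)) => h.
  have := before_find 0 h; rewrite /=; case: (nth 0 s i) => //.
case: (boolP (0 \in s)) => m.
  have := part_mono ps h; rewrite nth_index //; lia.
by rewrite nth_default //; move: h; rewrite memNindex.
Qed.

Lemma eq_lt a b : (forall i, (i < a) = (i < b)) -> a = b.
Proof.
move=> h; have := h a; have := h b; rewrite !ltnn; lia.
Qed.

Lemma hh_le_sumn s : part s -> hh s <= sumn s.
Proof.
move=> ps; have [sz _] := partP ps.
have hN : hh s <= N by rewrite -sz /hh index_size.
have : \sum_(0 <= i < N) (i < hh s : nat) <= sumn s.
  rewrite sumn_nth sz big_nat_cond [X in _ <= X]big_nat_cond; apply: leq_sum => i _.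
  by rewrite -pos_hh //; case: (nth 0 s i).
rewrite (@big_cat_nat _ _ _ (hh s)) //=.
rewrite (@eq_big_nat _ _ _ 0 (hh s) _ (fun _ => 1)); last by move=> i /andP [_ ->].
rewrite [X in _ + X](@eq_big_nat _ _ _ (hh s) N _ (fun _ => 0)); last first.
  by move=> i /andP [a _]; rewrite ltnNge a.
rewrite !sum_nat_const_nat; lia.
Qed.

Lemma nth_predn s i : nth 0 (map predn s) i = (nth 0 s i).-1.
Proof.
case: (ltnP i (size s)) => h; first by rewrite (nth_map 0).
by rewrite !nth_default ?size_map.
Qed.

Lemma part_predn s : part s -> part (map predn s).
Proof.
move=> ps; have [sz h] := partP ps; apply: partI; first by rewrite size_map.
by move=> i; rewrite !nth_predn; have := h i; lia.
Qed.

Lemma sum_eq1 c : \sum_(0 <= j < N) (j == c : nat) <= 1.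
Proof.
case: (ltnP c N) => h.
  rewrite (@sum_split_at xpredT _ _ h) /= eqxx big1 // => i /= ne; by rewrite (negbTE ne).
rewrite big_nat_cond big1 // => i /andP [/andP [_ iN] _].
have : i != c by apply/eqP; lia.
by move/negbTE ->.
Qed.

Lemma col_bound n lam : part lam -> sumn lam = n ->
  f n lam <= 'C(n, hh lam) * f (n - hh lam) (map predn lam).
Proof.
elim: n lam => [|n IH] lam pl sl.
  have z := part_sum0 pl sl.
  have -> : hh lam = 0.
    apply: eq_lt => i; rewrite -pos_hh // z nth_nseq; by case: ifP.
  by rewrite bin0 mul1n subn0 z (_ : map predn zero = zero) // /zero map_nseq.
have [szl hl] := partP pl.
set h := hh lam; set mu := map predn lam.
have pm := part_predn pl.
have [szm hm] := partP pm.
have h1 : 0 < h by rewrite /h -pos_hh //; exact: (first_pos pl sl).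
have hn : h <= n.+1 by rewrite -sl; exact: hh_le_sumn.
rewrite branch //.
apply: (@leq_trans (\sum_(0 <= j < N) ((j.+1 == h) * ('C(n, h.-1) * f (n.+1 - h) mu) +
                     remb mu j * ('C(n, h) * f (n - h) (decr mu j))))).
  rewrite big_mkcond /= big_nat_cond [X in _ <= X]big_nat_cond.
  apply: leq_sum => j /andP [/andP [_ jN] _].
  case r: (remb lam j) => //.
  have pd := part_decr pl jN r.
  have j0 : 0 < nth 0 lam j by move: r; rewrite /remb; lia.
  have := IH _ pd; rewrite sumn_decr ?szl // sl => /(_ erefl) Hd.
  case e1: (nth 0 lam j == 1).
    have hd : hh (decr lam j) = j.
      apply: eq_lt => i; rewrite -pos_hh // nth_decr.
      case: (ltngtP i j) => c.
      - have := part_mono pl (ltnW c); move/eqP: e1; lia.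
      - apply/negbTE; rewrite -leqNgt; have := part_mono pl c; move: r; rewrite /remb; move/eqP: e1; lia.
      - by move/eqP: e1 => ->.
    have hl1 : h = j.+1.
      apply: esym; apply: eq_lt => i; rewrite -pos_hh //.
      case: (ltnP j i) => c.
      - have := part_mono pl c; move: r; rewrite /remb; move/eqP: e1; lia.
      - have := part_mono pl c; move/eqP: e1; lia.
    have md : map predn (decr lam j) = mu.
      apply: eq_seqN; [by rewrite size_map size_decr szl | by rewrite size_map | move=> i].
      rewrite !nth_predn nth_decr; case: eqP => [->|] //; move/eqP: e1 => -> //.
    rewrite hd md in Hd; rewrite hl1 eqxx mul1n /= subSS; exact: leq_trans Hd (leq_addr _ _).
  have hd : hh (decr lam j) = h.
    apply: eq_lt => i; rewrite -!pos_hh // nth_decr; case: eqP => [->|] //.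
    move/negbT: e1; lia.
  have md : map predn (decr lam j) = decr mu j.
    apply: eq_seqN; [by rewrite size_map size_decr szl | by rewrite size_decr szm | move=> i].
    by rewrite /mu !nth_predn !nth_decr !nth_predn; case: eqP.
  have rm : remb mu j by rewrite /remb !nth_predn; move: r; rewrite /remb; move/negbT: e1; lia.
  rewrite hd md in Hd; rewrite rm mul1n; exact: leq_trans Hd (leq_addl _ _).
rewrite big_split /=.
have A : \sum_(0 <= j < N) (j.+1 == h) * ('C(n, h.-1) * f (n.+1 - h) mu) <= 'C(n, h.-1) * f (n.+1 - h) mu.
  rewrite -big_distrl /=.
  have : \sum_(0 <= j < N) (j.+1 == h : nat) <= 1.
    rewrite (eq_bigr (fun j => (j == h.-1 : nat))); first exact: sum_eq1.
    by move=> j _; case: h h1 {hn} => // h' _; rewrite eqSS.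
  by case: (\sum_(0 <= j < N) _) => [|[|]] //= _; rewrite ?mul1n.
have B : \sum_(0 <= j < N) remb mu j * ('C(n, h) * f (n - h) (decr mu j)) <= 'C(n, h) * f (n.+1 - h) mu.
  case: (leqP h n) => hn'; last by rewrite bin_small // mul0n big1 // => j _; rewrite mul0n muln0.
  rewrite (subSn hn') (branch _ pm) big_distrr /= [X in _ <= X]big_mkcond /=.
  apply: leq_sum => j _; by case: (remb mu j); rewrite ?mul1n ?mul0n ?muln0.
have := leq_add A B.
rewrite -mulnDl; case: h h1 {hn A B} => // h' _ /=.
by rewrite binS [_ + 'C(n, h')]addnC.
Qed.


Lemma pair_eqv p (a b : 'I_p * 'I_p) : (a.1 : nat) = b.1 -> (a.2 : nat) = b.2 -> a = b.
Proof. by case: a b => [a1 a2] [b1 b2] /= e1 e2; congr pair; apply: val_inj. Qed.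

Lemma syt_props p lam (t : {ffun 'I_p -> 'I_p * 'I_p}) : is_syt lam t ->
  [/\ injective t, forall k, in_diagram lam ((t k).1 : nat, (t k).2 : nat) &
      forall k l, (t k).1 <= (t l).1 -> (t k).2 <= (t l).2 -> k <= l].
Proof.
move/and3P => [/injectiveP ti /forallP td /forallP tm]; split => // k l h1 h2.
by have := tm k => /forallP/(_ l)/implyP; apply; rewrite h1 h2.
Qed.

Lemma cell_lt lam p r c : part lam -> sumn lam = p -> in_diagram lam (r, c) -> r < p /\ c < p.
Proof.
move=> pl sl /andP [/= rs cs]; split.
  by rewrite -sl; apply: leq_trans (hh_le_sumn pl); rewrite -pos_hh //; lia.
by rewrite -sl; apply: leq_trans cs (nth_le_sumn _ _).
Qed.

Lemma sum_lt_min p a : \sum_(c < p) (c < a : nat) = minn a p.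
Proof. elim: p => [|p IH]; first by rewrite big_ord0; lia. by rewrite big_ord_recr /= IH; lia. Qed.

Lemma syt_surj lam p (t : {ffun 'I_p -> 'I_p * 'I_p}) : part lam -> sumn lam = p -> p <= N ->
  is_syt lam t -> forall r c, in_diagram lam (r, c) ->
  exists k, ((t k).1 : nat) = r /\ ((t k).2 : nat) = c.
Proof.
move=> pl sl pN st; have [ti td tm] := syt_props st; have [szl _] := partP pl.
set D := [set x : 'I_p * 'I_p | in_diagram lam (x.1 : nat, x.2 : nat)].
set I := [set t k | k : 'I_p].
have cI : #|I| = p by rewrite card_imset // ?cardsT card_ord.
have sID : I \subset D by apply/fintype.subsetP => x /imsetP [k _ ->]; rewrite inE td.
have cD : #|D| <= p.
  rewrite -sum1_card.
  rewrite (eq_bigl (fun x : 'I_p * 'I_p => in_diagram lam (x.1 : nat, x.2 : nat))); last by move=> x; rewrite inE.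
  rewrite big_mkcond /=.
  rewrite -(pair_big xpredT xpredT (fun (i j : 'I_p) => if in_diagram lam (i : nat, j : nat) then 1 else 0)) /=.
  apply: (@leq_trans (\sum_(i < p) nth 0 lam i)).
    apply: leq_sum => i _.
    apply: (@leq_trans (\sum_(c < p) (c < nth 0 lam i : nat))).
      by apply: leq_sum => c _; rewrite /in_diagram /=; case: (i < size lam); case: (c < nth 0 lam i).
    by rewrite sum_lt_min geq_minl.
  apply: (@leq_trans (\sum_(0 <= i < N) nth 0 lam i)); last by rewrite -szl -sumn_nth sl.
  rewrite -(big_mkord xpredT (fun i => nth 0 lam i)).
  by rewrite [X in _ <= X](@big_cat_nat _ _ _ p) //= leq_addr.
have EID : I = D by apply/eqP; rewrite eqEcard sID cI.
move=> r c dc; have [rp cp] := cell_lt pl sl dc.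
have : (Ordinal rp, Ordinal cp) \in D by rewrite inE.
rewrite -EID => /imsetP [k _ e]; exists k; by rewrite -e.
Qed.


Lemma syt_max m lam (t : {ffun 'I_m.+1 -> 'I_m.+1 * 'I_m.+1}) :
  part lam -> sumn lam = m.+1 -> m.+1 <= N -> is_syt lam t ->
  ((t ord_max).2 : nat).+1 = nth 0 lam (t ord_max).1 /\ remb lam (t ord_max).1.
Proof.
move=> pl sl mN st; have [ti td tm] := syt_props st.
have sj := syt_surj pl sl mN st.
have [szl hl] := partP pl.
have maxk : forall k : 'I_m.+1, (ord_max : 'I_m.+1) <= k -> k = ord_max.
  by move=> k h; apply: val_inj => /=; have := ltn_ord k; move: h => /=; lia.
have := td ord_max; move=> /andP [/= rs cs].
split.
- apply/eqP; rewrite eqn_leq cs /= leqNgt; apply/negP => h.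
  have [k [e1 e2]] : exists k, ((t k).1 : nat) = (t ord_max).1 /\ ((t k).2 : nat) = ((t ord_max).2).+1.
    by apply: sj; rewrite /in_diagram /= rs h.
  have := tm ord_max k; rewrite e1 e2 => /(_ (leqnn _) (leqnSn _)) /maxk ek.
  by move: e2; rewrite ek; lia.
- rewrite /remb ltnNge; apply/negP => h.
  have rs1 : (t ord_max).1.+1 < size lam.
    rewrite ltnNge; apply/negP => h2; move: h; rewrite (nth_default _ h2); lia.
  have [k [e1 e2]] : exists k, ((t k).1 : nat) = ((t ord_max).1).+1 /\ ((t k).2 : nat) = (t ord_max).2.
    by apply: sj; rewrite /in_diagram /= rs1 /=; lia.
  have := tm ord_max k; rewrite e1 e2 => /(_ (leqnSn _) (leqnn _)) /maxk ek.
  by move: e1; rewrite ek; lia.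
Qed.

Definition restr m (t : {ffun 'I_m.+1 -> 'I_m.+1 * 'I_m.+1}) : {ffun 'I_m -> 'I_m * 'I_m} :=
  [ffun k : 'I_m => (insubd k ((t (widen_ord (leqnSn m) k)).1 : nat),
                     insubd k ((t (widen_ord (leqnSn m) k)).2 : nat))].

Lemma restr_facts m lam (t : {ffun 'I_m.+1 -> 'I_m.+1 * 'I_m.+1}) :
  part lam -> sumn lam = m.+1 -> m.+1 <= N -> is_syt lam t ->
  forall k : 'I_m,
   in_diagram (decr lam (t ord_max).1) ((t (widen_ord (leqnSn m) k)).1 : nat, (t (widen_ord (leqnSn m) k)).2 : nat) /\
   ((restr t k).1 : nat) = (t (widen_ord (leqnSn m) k)).1 /\
   ((restr t k).2 : nat) = (t (widen_ord (leqnSn m) k)).2.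
Proof.
move=> pl sl mN st k; have [ti td tm] := syt_props st.
have [cmax rmax] := syt_max pl sl mN st.
have [szl hl] := partP pl.
set x := t (widen_ord (leqnSn m) k).
have xn : x <> t ord_max.
  move/ti => /(congr1 val) /= e; have := ltn_ord k; lia.
have rN : (t ord_max).1 < N by have := td ord_max; rewrite -szl => /andP [].
have dd : in_diagram (decr lam (t ord_max).1) (x.1 : nat, x.2 : nat).
  have := td (widen_ord (leqnSn m) k); rewrite -/x => /andP [/= xs xc].
  rewrite /in_diagram /= size_decr ?szl // -szl xs /= nth_decr; case: eqP => e //.
  have x2 : (x.2 : nat) != (t ord_max).2.
    by apply/eqP => e2; apply: xn; apply: pair_eqv.
  move: xc; rewrite e -cmax /=; move: x2; lia.
have pd := part_decr pl rN rmax.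
have sd : sumn (decr lam (t ord_max).1) = m.
  rewrite sumn_decr ?szl // ?sl //; lia.
have [l1 l2] := cell_lt pd sd dd.
split => //; rewrite /restr ffunE /= !val_insubd -/x l1 l2 //.
Qed.

Lemma restr_syt m lam (t : {ffun 'I_m.+1 -> 'I_m.+1 * 'I_m.+1}) :
  part lam -> sumn lam = m.+1 -> m.+1 <= N -> is_syt lam t ->
  is_syt (decr lam (t ord_max).1) (restr t).
Proof.
move=> pl sl mN st; have [ti td tm] := syt_props st.
have F := restr_facts pl sl mN st.
apply/and3P; split.
- apply/injectiveP => k1 k2 e.
  have [_ [a1 a2]] := F k1; have [_ [b1 b2]] := F k2.
  have : t (widen_ord (leqnSn m) k1) = t (widen_ord (leqnSn m) k2).
    by apply: pair_eqv; rewrite -?a1 -?b1 -?a2 -?b2 e.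
  by move/ti => /(congr1 val) /= ek; apply: val_inj.
- by apply/forallP => k; have [d [a1 a2]] := F k; rewrite a1 a2.
- apply/forallP => k; apply/forallP => l; apply/implyP => /andP [h1 h2].
  have [_ [a1 a2]] := F k; have [_ [b1 b2]] := F l.
  rewrite a1 b1 in h1; rewrite a2 b2 in h2.
  by have := tm _ _ h1 h2.
Qed.

Lemma restr_inj m lam (t1 t2 : {ffun 'I_m.+1 -> 'I_m.+1 * 'I_m.+1}) :
  part lam -> sumn lam = m.+1 -> m.+1 <= N -> is_syt lam t1 -> is_syt lam t2 ->
  (t1 ord_max).1 = (t2 ord_max).1 -> restr t1 = restr t2 -> t1 = t2.
Proof.
move=> pl sl mN s1 s2 e r.
have F1 := restr_facts pl sl mN s1; have F2 := restr_facts pl sl mN s2.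
apply/ffunP => x; case: (ltnP x m) => h.
  have -> : x = widen_ord (leqnSn m) (Ordinal h) by apply: val_inj.
  have [_ [a1 a2]] := F1 (Ordinal h); have [_ [b1 b2]] := F2 (Ordinal h).
  by apply: pair_eqv; rewrite -?a1 -?b1 -?a2 -?b2 r.
have -> : x = ord_max by apply: val_inj => /=; have := ltn_ord x; lia.
have [c1 _] := syt_max pl sl mN s1; have [c2 _] := syt_max pl sl mN s2.
apply: pair_eqv; first by rewrite e.
by move: c1 c2; rewrite e => <- [->].
Qed.

Lemma branch_dim m lam : part lam -> sumn lam = m.+1 -> m.+1 <= N ->
  dim_irrep m.+1 lam <= \sum_(0 <= j < N | remb lam j) dim_irrep m (decr lam j).
Proof.
move=> pl sl mN.
rewrite [in X in X <= _]/dim_irrep -sum1_card.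
rewrite (partition_big (fun t : {ffun 'I_m.+1 -> 'I_m.+1 * 'I_m.+1} => (t ord_max).1) xpredT) //=.
apply: (@leq_trans (\sum_(j < m.+1) (remb lam j * dim_irrep m (decr lam j)))).
  apply: leq_sum => j _.
  case r: (remb lam j).
    rewrite mul1n sum1dep_card.
    set Sj := [set x | _].
    have inj : {in Sj &, injective (@restr m)}.
      move=> t1 t2; rewrite !inE => /andP [h1 /eqP e1] /andP [h2 /eqP e2].
      by apply: (restr_inj pl sl mN h1 h2); rewrite e1 e2.
    rewrite -(card_in_imset inj) /dim_irrep; apply: subset_leq_card.
    apply/fintype.subsetP => u /imsetP [t]; rewrite !inE => /andP [h1 /eqP e1] ->.
    by rewrite -e1; apply: restr_syt.
  rewrite mul0n big1 // => t; rewrite inE => /andP [h1 /eqP e1].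
  have [_ rm] := syt_max pl sl mN h1.
  by move: r; rewrite -e1 rm.
rewrite -(big_mkord xpredT (fun j => remb lam j * dim_irrep m (decr lam j))).
rewrite [X in _ <= X]big_mkcond [X in _ <= X](@big_cat_nat _ _ _ m.+1) //=.
apply: leq_trans (leq_addr _ _); apply: leq_sum => j _; by case: (remb lam j); rewrite ?mul1n.
Qed.

Lemma dim_le_f m lam : part lam -> sumn lam = m -> m <= N -> dim_irrep m lam <= f m lam.
Proof.
elim: m lam => [|m IH] lam pl sl mN.
  rewrite (part_sum0 pl sl) /f /= eqxx /dim_irrep.
  by apply: leq_trans (max_card _) _; rewrite card_ffun card_ord expn0.
apply: leq_trans (branch_dim pl sl mN) _; rewrite branch //.
rewrite big_nat_cond [X in _ <= X]big_nat_cond; apply: leq_sum => j /andP [/andP [_ jN] r].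
have [szl _] := partP pl.
apply: IH; [exact: part_decr | | lia].
rewrite sumn_decr ?szl ?sl //; move: r; rewrite /remb; lia.
Qed.

End Young.

Lemma ffact_le_exp n k : (n ^_ k <= n ^ k)%N.
Proof.
elim: k n => [|k IH] n //; rewrite ffactnS expnS leq_mul //.
apply: leq_trans (IH n.-1) _; case: k {IH} => [|k] //.
by rewrite leq_exp2r // leq_pred.
Qed.

Local Open Scope ring_scope.

Section Real.
Variable R : realType.

Lemma expR_small (x : R) : 0 < x < 1 -> expR x * (1 - x) < 1.
Proof.
move=> /andP [x0 x1].
have nx : - x != 0 by rewrite oppr_eq0 gt_eqF.
have h := expR_gt1Dx nx.
have e := expRxMexpNx_1 x.
have ex := expR_gt0 x.
rewrite -e ltr_pM2l //; lra.
Qed.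

Lemma ln2_gt : 3/5 < ln (2 : R).
Proof.
set b := expR (1/5 : R).
have hb : b * (1 - 1/5) < 1 by apply: expR_small; lra.
have b0 : 0 < b by apply: expR_gt0.
have e3 : expR (3/5 : R) = b ^+ 3 by rewrite -expRM_natl; congr expR; lra.
have : expR (3/5 : R) < 2 by rewrite e3; nra.
rewrite -ltr_ln ?posrE ?expR_gt0 // expRK //.
Qed.

Lemma e52_lt : expR (5/2 : R) < 23.
Proof.
set a := expR (1/6 : R).
have ha : a * (1 - 1/6) < 1 by apply: expR_small; lra.
have a0 : 0 < a by apply: expR_gt0.
have e : expR (5/2 : R) = a ^+ 15 by rewrite -expRM_natl; congr expR; lra.
have a1 : a < 6/5 by lra.
rewrite e; apply: (@le_lt_trans _ _ ((6/5) ^+ 15)).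
  by apply: lerXn2r; rewrite ?nnegrE; lra.
rewrite !exprS expr0; lra.
Qed.

Lemma kfact (k : nat) : (k%:R : R) ^+ k <= expR 1 ^+ k * (k`!)%:R.
Proof.
elim: k => [|k IH]; first by rewrite !expr0 mul1r fact0.
have e1 : 2 <= expR (1 : R) by have := expR_ge1Dx (1 : R); lra.
have h1 : (k.+1%:R : R) ^+ k <= expR 1 * (k%:R) ^+ k.
  case: k {IH} => [|k]; first by rewrite !expr0; lra.
  have k0 : (0 : R) < k.+1%:R by rewrite ltr0n.
  have -> : (k.+2%:R : R) = k.+1%:R * (1 + 1 / k.+1%:R).
    by rewrite -natr1; field; rewrite gt_eqF.
  rewrite exprMn mulrC; apply: ler_wpM2r; first by rewrite exprn_ge0 // ltW.
  have eE : expR (1 : R) = expR (1 / k.+1%:R) ^+ k.+1.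
    by rewrite -expRM_natl; congr expR; field; exact: lt0r_neq0.
  rewrite eE.
  apply: lerXn2r; rewrite ?nnegrE ?expR_ge0 //; last by rewrite expR_ge1Dx.
rewrite exprS factS natrM exprS.
have kk : (0 : R) <= k.+1%:R by rewrite ler0n.
apply: (@le_trans _ _ (k.+1%:R * (expR 1 * k%:R ^+ k))); first by apply: ler_wpM2l.
have e0 : (0 : R) <= expR 1 by apply: expR_ge0.
have := ler_wpM2l (mulr_ge0 e0 kk) IH; lra.
Qed.


Lemma sq_lt (a b : R) : 0 <= a -> a < b -> a ^+ 2 < b ^+ 2.
Proof. move=> a0 ab; nra. Qed.

Lemma real_part (n k d : nat) : (k <= n)%N ->
  (d * d <= 'C(n, k) * 'C(n, k) * (n - k)`!)%N ->
  expR (- (Num.sqrt (n%:R : R) * ln (n%:R : R))) * Num.sqrt ((n`!)%:R : R) < d%:R ->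
  k%:R < 4 * Num.sqrt (n%:R : R) * ln (n%:R : R).
Proof.
move=> kn dd H.
set q := Num.sqrt (n%:R : R); set L := ln (n%:R : R); set s := q * L.
have C0 : (0 < 'C(n, k))%N by rewrite bin_gt0.
have F : n`! = ('C(n, k) * (k`! * (n - k)`!))%N by rewrite bin_fact.
set E := expR (- s).
have E0 : 0 < E by apply: expR_gt0.
have S1 : E ^+ 2 * (n`!)%:R < (d%:R) ^+ 2.
  have := sq_lt (mulr_ge0 (ltW E0) (sqrtr_ge0 _)) H.
  by rewrite exprMn sqr_sqrtr // ler0n.
have S2 : (d%:R : R) ^+ 2 <= ('C(n, k) * 'C(n, k) * (n - k)`!)%:R.
  by rewrite -natrX ler_nat expnS expn1.
have S3 : E ^+ 2 * (k`!)%:R < ('C(n, k))%:R.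
  have := lt_le_trans S1 S2; rewrite F !natrM => h.
  have P : (0 : R) < 'C(n, k)%:R * (n - k)`!%:R by rewrite -natrM ltr0n muln_gt0 C0 fact_gt0.
  rewrite -(ltr_pM2r P); lra.
rewrite ltNge; apply/negP => hk.
have q0 : 0 <= q by apply: sqrtr_ge0.
have qq : q ^+ 2 = n%:R by rewrite sqr_sqrtr // ler0n.
case: (ltnP n 2) => n2.
  have s0 : s = 0.
    have [e|e] : n = 0%N \/ n = 1%N by lia.
      by rewrite /s /q e sqrtr0 mul0r.
    by rewrite /s /L e ln1 mulr0.
  move: S3; rewrite /E s0 oppr0 expR0 expr1n mul1r ltr_nat.
  have : ('C(n, k) <= 1)%N.
    have [e|e] : n = 0%N \/ n = 1%N by lia.
      by move: kn; rewrite e; case: k {dd H hk F C0 S1 S2}.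
    by move: kn; rewrite e; case: k {dd H hk F C0 S1 S2} => [|[|]].
  have := fact_gt0 k; lia.
have l2 := ln2_gt.
have L0 : 3/5 < L.
  apply: lt_le_trans l2 _; rewrite /L ler_ln ?posrE ?ltr0n //; [by rewrite ler_nat | lia].
case: (ltnP n 4) => n4.
  have k3 : (k%:R : R) <= 3%:R by rewrite ler_nat; lia.
  have n2' : (2%:R : R) <= n%:R by rewrite ler_nat.
  have : 7/5 < q by nra.
  move=> q7; nra.
have L0' : 0 <= L by lra.
have L1 : 6/5 < L.
  have l4 : ln (4 : R) = ln 2 + ln 2.
    by rewrite -lnM ?posrE //; congr ln; lra.
  apply: (@lt_le_trans _ _ (ln (4 : R))); first by rewrite l4; lra.
  rewrite /L ler_ln ?posrE ?ltr0n; [ | lia | lia].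
  by rewrite ler_nat.
have n0 : (0 : R) < n%:R by rewrite ltr0n; lia.
set g := expR (-1/2 : R); set e := expR (1 : R).
have g0 : 0 < g by apply: expR_gt0.
have e0 : 0 < e by apply: expR_gt0.
have hs : s = q * L by [].
have G : g ^+ k <= E ^+ 2.
  rewrite /E /g -!expRM_natl ler_expR; nra.
set Af : R := (k`!)%:R.
have A0 : 0 < Af by rewrite ltr0n fact_gt0.
have T1 : 'C(n, k)%:R * Af <= n%:R ^+ k.
  by rewrite -natrM -natrX ler_nat bin_ffact ffact_le_exp.
have X1 : E ^+ 2 * Af * Af < n%:R ^+ k.
  apply: lt_le_trans T1; rewrite ltr_pM2r //.
have T2 := kfact k.
have X2 : (k%:R ^+ 2) ^+ k <= (e ^+ k) ^+ 2 * (Af * Af).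
  rewrite exprAC -[Af * Af]expr2 -exprMn; apply: lerXn2r; rewrite ?nnegrE //.
  by rewrite mulr_ge0 // ?exprn_ge0 // ltW.
have X3 : (16 * n%:R * L ^+ 2) ^+ k <= (k%:R ^+ 2) ^+ k.
  have qL0 : 0 <= 4 * q * L by rewrite mulr_ge0 // mulr_ge0.
  have hk2 := ler_pM qL0 qL0 hk hk.
  have e16 : 4 * q * L * (4 * q * L) = 16 * n%:R * L ^+ 2 by rewrite -qq; ring.
  rewrite e16 -expr2 in hk2.
  apply: lerXn2r; rewrite ?nnegrE //.
  by rewrite mulr_ge0 // ?exprn_ge0 // mulr_ge0 // ler0n.
have Ek0 : 0 < e ^+ k by apply: exprn_gt0.
have Y : (g * (16 * n%:R * L ^+ 2)) ^+ k < (e ^+ 2 * n%:R) ^+ k.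
  rewrite exprMn [X in _ < X]exprMn (exprAC e 2 k).
  have P0 : 0 <= (16 * n%:R * L ^+ 2) ^+ k by apply: exprn_ge0; nra.
  have gk0 : 0 <= g ^+ k by apply: exprn_ge0; exact: ltW.
  have Z1 : g ^+ k * (16 * n%:R * L ^+ 2) ^+ k <= E ^+ 2 * (k%:R ^+ 2) ^+ k.
    by apply: ler_pM.
  have E20 : 0 <= E ^+ 2 by apply: exprn_ge0; exact: ltW.
  have Z2 : E ^+ 2 * (k%:R ^+ 2) ^+ k <= E ^+ 2 * ((e ^+ k) ^+ 2 * (Af * Af)).
    by apply: ler_wpM2l.
  have Ek20 : 0 < (e ^+ k) ^+ 2 by apply: exprn_gt0.
  have Z3 : (e ^+ k) ^+ 2 * (E ^+ 2 * Af * Af) < (e ^+ k) ^+ 2 * n%:R ^+ k.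
    by rewrite ltr_pM2l.
  lra.
have V : g * (16 * n%:R * L ^+ 2) < e ^+ 2 * n%:R.
  rewrite ltNge; apply/negP => h; move: Y; rewrite ltNge => /negP; apply.
  apply: lerXn2r => //; rewrite nnegrE; apply: mulr_ge0; rewrite ?exprn_ge0 ?ler0n ?mulr_ge0 // ?ltW //; nra.
have h0 : 0 < expR (1/2 : R) by apply: expR_gt0.
have eg : expR (1/2 : R) * g = 1 by rewrite /g -expRD; rewrite (_ : 1/2 + -1/2 = 0); [exact: expR0 | lra].
have e5 : expR (1/2 : R) * e ^+ 2 = expR (5/2).
  by rewrite /e -expRM_natl -expRD; congr expR; lra.
have W : 16 * L ^+ 2 * n%:R < expR (5/2) * n%:R.
  have W1 : expR (1/2 : R) * (g * (16 * n%:R * L ^+ 2)) < expR (1/2) * (e ^+ 2 * n%:R).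
    by rewrite ltr_pM2l.
  have w1 : expR (1/2 : R) * (g * (16 * n%:R * L ^+ 2)) = 16 * n%:R * L ^+ 2 by rewrite mulrA eg mul1r.
  have w2 : expR (1/2 : R) * (e ^+ 2 * n%:R) = expR (5/2) * n%:R by rewrite mulrA e5.
  rewrite w1 w2 in W1; lra.
have W2 : 16 * L ^+ 2 < expR (5/2 : R) by rewrite -(ltr_pM2r n0).
have := e52_lt; nra.
Qed.

End Real.

Lemma pos_size (s : seq nat) : all (fun r => (0 < r)%N) s -> (size s <= sumn s)%N.
Proof. elim: s => [|x s IH] //= /andP [x0 h]; have := IH h; lia. Qed.

Lemma comb_main n la : is_partition n la ->
  [/\ (yd_width la <= n)%N, (yd_height la <= n)%N,
      (dim_irrep n la * dim_irrep n la <= 'C(n, yd_width la) * 'C(n, yd_width la) * (n - yd_width la)`!)%N &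
      (dim_irrep n la * dim_irrep n la <= 'C(n, yd_height la) * 'C(n, yd_height la) * (n - yd_height la)`!)%N].
Proof.
move=> /and3P [so po /eqP sm].
have szla : (size la <= n)%N by rewrite -sm; apply: pos_size.
case: (posnP n) => [n0 | n0].
  have la0 : la = [::].
    by move: sm po; rewrite n0; case: la {so szla} => //= x s; rewrite /=; case: x.
  have d1 : (dim_irrep n la <= 1)%N.
    rewrite /dim_irrep n0; apply: leq_trans (max_card _) _; by rewrite card_ffun card_ord expn0.
  rewrite la0 /yd_width /yd_height /= n0 bin0 fact0 !muln1.
  have : (dim_irrep 0 [::] * dim_irrep 0 [::] <= 1)%N.
    by move: d1; rewrite la0 n0; case: (dim_irrep 0 [::]) => [|[|]].
  by move=> h; split.
set lam := la ++ nseq (n - size la) 0.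
have szl : size lam = n by rewrite size_cat size_nseq; lia.
have tr : transitive geq by move=> y x z h1 h2; exact: leq_trans h2 h1.
have pl : part n lam.
  apply: partI => // i; rewrite !nth_cat.
  case: (ltnP i.+1 (size la)) => h.
    rewrite (ltnW h).
    have := sorted_ltn_nth tr 0 so; move=> /(_ i i.+1); rewrite !inE => /(_ (ltnW h) h (ltnSn i)); exact.
  by rewrite nth_nseq; case: ifP.
have sl : sumn lam = n by rewrite sumn_cat sumn_nseq mul0n addn0.
have dimE : dim_irrep n la = dim_irrep n lam.
  have E : forall c, in_diagram lam c = in_diagram la c.
    move=> [r c]; rewrite /in_diagram /= size_cat nth_cat.
    case: (ltnP r (size la)) => h; first by rewrite ltn_addr.
    by rewrite nth_nseq; case: ifP; rewrite ltn0 andbF.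
  rewrite /dim_irrep; apply: eq_card => t; rewrite !inE /is_syt.
  by rewrite (eq_forallb (fun k => E _)).
have wE : yd_width la = nth 0 lam 0.
  by rewrite /yd_width /lam; case: (la) => [|x s] //=; rewrite nth_nseq; case: ifP.
have hE : yd_height la = hh lam.
  rewrite /yd_height /hh /lam index_cat.
  have -> : (0 \in la) = false.
    by apply/negbTE/negP => /(allP po).
  by case: (n - size la)%N => [|m] /=; rewrite addn0.
have d1 := dim_le_f pl sl (leqnn n).
rewrite dimE.
have kn : (nth 0 lam 0 <= n)%N by rewrite -sl; apply: nth_le_sumn.
have hn : (hh lam <= n)%N by rewrite -[X in (_ <= X)%N]sl; exact: hh_le_sumn pl.
split; rewrite ?wE ?hE //.
  have r1 := row_bound n0 pl sl.
  have f2 := @f_sq_le n (n - nth 0 lam 0) (shift lam) (leq_subr _ _).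
  set d := dim_irrep n lam in d1 *; set C := 'C(n, _) in r1 *; set g := f _ _ (shift lam) in r1 f2 *.
  have h1 := leq_trans d1 r1.
  apply: leq_trans (leq_mul h1 h1) _.
  by rewrite mulnACA leq_mul2l f2 orbT.
have c1 := col_bound pl sl.
have f2 := @f_sq_le n (n - hh lam) (map predn lam) (leq_subr _ _).
set d := dim_irrep n lam in d1 *; set C := 'C(n, _) in c1 *; set g := f _ _ (map predn lam) in c1 f2 *.
have h1 := leq_trans d1 c1.
apply: leq_trans (leq_mul h1 h1) _.
by rewrite mulnACA leq_mul2l f2 orbT.
Qed.

Theorem lemma5 (R : realType) (n : nat) (la : seq nat) :
  is_partition n la ->
  expR (- (Num.sqrt (n%:R : R) * ln (n%:R : R))) * Num.sqrt ((n`!)%:R : R)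
    < (dim_irrep n la)%:R ->
  (yd_width la)%:R < 4 * Num.sqrt (n%:R : R) * ln (n%:R : R) /\
  (yd_height la)%:R < 4 * Num.sqrt (n%:R : R) * ln (n%:R : R).
Proof.
move=> ip H; have [wn hn dw dh] := comb_main ip.
by split; apply: real_part H.
Qed.
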